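(* $20,21,22,23,24,25\notin\operatorname{Spec}(32_{65})$; that is, $\{20,21,22,23,24,25\}\cap\operatorname{Spec}(32_{65})=\emptyset$.
   Context: $32_{65}$ is the finite integral symmetric relation algebra with atoms $1'$, $a$, $b$, $c$, all symmetric, in which a diversity cycle $xyz$ (with $x,y,z\in\{a,b,c\}$) is mandatory (i.e. $x;y\ge z$) if it involves $a$ and forbidden (i.e. $x;y\cdot z=0$) otherwise. A representation over a set $U$ is an embedding into the full relation algebra on $U\times U$. $\operatorname{Spec}(A)$ is the set of cardinals $\alpha\le\omega$ such that $A$ has a representation over a set of cardinality $\alpha$. *)

(* Defs.v *)
From HB Require Import structures.
From mathcomp Require Import all_boot.

Set Implicit Arguments.
Unset Strict Implicit.
Unset Printing Implicit Defensive.

(* Atoms of 32_65: the identity atom 1' (called [Id]) and diversity atoms a b c. *)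
Inductive atom := Id | At_a | At_b | At_c.

Definition atom_to_ord (x : atom) : 'I_4 :=
  match x with Id => inord 0 | At_a => inord 1 | At_b => inord 2 | At_c => inord 3 end.
Definition ord_to_atom (i : 'I_4) : atom :=
  match val i with 0 => Id | 1 => At_a | 2 => At_b | _ => At_c end.
Lemma atom_ordK : cancel atom_to_ord ord_to_atom.
Proof. by case; rewrite /ord_to_atom /= inordK. Qed.

HB.instance Definition _ := Equality.copy atom (can_type atom_ordK).
HB.instance Definition _ := Finite.copy atom (can_type atom_ordK).

Definition conv_atom (x : atom) : atom := x.

(* [le_comp x y z] holds iff z <= x ; y in 32_65.
   Identity cycles: 1';y = y, x;1' = x, and x;y >= 1' iff y = converse x = x.
   Diversity cycles xyz are mandatory iff they involve a, forbidden otherwise. *)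
Definition le_comp (x y z : atom) : bool :=
  if x == Id then z == y
  else if y == Id then z == x
  else if z == Id then x == y
  else [|| x == At_a, y == At_a | z == At_a].

Definition RA := {set atom}.
Definition ra_comp (X Y : RA) : RA :=
  [set z | [exists x in X, exists y in Y, le_comp x y z]].
Definition ra_conv (X : RA) : RA := [set conv_atom x | x in X].
Definition ra_id : RA := [set Id].

Definition rel_comp (U : finType) (R S : {set U * U}) : {set U * U} :=
  [set p | [exists w, ((p.1, w) \in R) && ((w, p.2) \in S)]].
Definition rel_conv (U : finType) (R : {set U * U}) : {set U * U} :=
  [set p | (p.2, p.1) \in R].
Definition rel_id (U : finType) : {set U * U} := [set p | p.1 == p.2].

Definition representation (U : finType) (h : RA -> {set U * U}) : Prop :=
  (forall X Y, h (X :|: Y) = h X :|: h Y) /\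
  (forall X, h (~: X) = ~: h X) /\
  (h set0 = set0 /\ h setT = setT) /\
  (forall X Y, h (ra_comp X Y) = rel_comp (h X) (h Y)) /\
  (forall X, h (ra_conv X) = rel_conv (h X)) /\
  h ra_id = rel_id U /\
  injective h.

Definition in_Spec (n : nat) : Prop :=
  exists (U : finType) (h : RA -> {set U * U}), #|U| = n /\ representation h.

(* Main.v *)
Require Import Defs.
From mathcomp Require Import all_boot.
From mathcomp Require Import zify.

Set Implicit Arguments.
Unset Strict Implicit.
Unset Printing Implicit Defensive.



Lemma card_sumI (T : finType) (A B : {set T}) :
  \sum_(i in A) (i \in B : nat) = #|A :&: B|.
Proof.
rewrite -sum1_card big_mkcond /= [RHS]big_mkcond /=.
by apply: eq_bigr => i _; rewrite inE; case: (i \in A); case: (i \in B).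
Qed.

Definition Nb (U : finType) (adj : rel U) (v : U) : {set U} := [set w | adj v w].
Definition Ab (U : finType) (adj : rel U) (v : U) : {set U} := ~: (v |: Nb adj v).

Record GG (U : finType) (adj : rel U) : Prop := {
 gsym : forall u w, adj u w = adj w u;
 girr : forall u, ~~ adj u u;
 gtri : forall u s w, adj u s -> adj s w -> ~~ adj u w;
 gmu : forall u w, u != w -> ~~ adj u w -> 4 <= #|Nb adj u :&: Nb adj w|;
 gx : forall u w, u != w -> ~~ adj u w -> exists s, adj s w && ~~ adj u s;
 gedge : forall u w, adj u w -> exists s, (s != u) && ~~ adj u s && ~~ adj s w;
 ganb : forall u, exists s, (s != u) && ~~ adj u s }.

Lemma inNb (U : finType) (adj : rel U) v w : (w \in Nb adj v) = adj v w.
Proof. by rewrite inE. Qed.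

Lemma inAb (U : finType) (adj : rel U) v w : (w \in Ab adj v) = (w != v) && ~~ adj v w.
Proof. by rewrite !inE negb_or. Qed.

Lemma Tsub (U : finType) (adj : rel U) (g : GG adj) u w x :
  u != w -> ~~ adj u w -> x \in Nb adj u :\: Nb adj w ->
  4 <= #|Nb adj w :\: Nb adj u|.
Proof.
move=> uw nuw; rewrite !inE => /andP [nwx ux].
have xw : x != w by apply/eqP => e; move: ux; rewrite e (negbTE nuw).
have nxw : ~~ adj x w by rewrite (gsym g).
apply: leq_trans (gmu g xw nxw) _; apply: subset_leq_card.
apply/subsetP => z; rewrite !inE => /andP [xz wz]; rewrite wz andbT.
exact: (gtri g ux xz).
Qed.

Lemma Xcard (U : finType) (adj : rel U) (g : GG adj) u w :
  u != w -> ~~ adj u w -> 4 <= #|Nb adj u :\: Nb adj w|.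
Proof.
move=> uw nuw.
have wu : w != u by rewrite eq_sym.
have nwu : ~~ adj w u by rewrite (gsym g).
have [s /andP [su nws]] := gx g wu nwu.
have sX : s \in Nb adj u :\: Nb adj w by rewrite !inE nws (gsym g).
have HT := Tsub g uw nuw sX.
have : 0 < #|Nb adj w :\: Nb adj u| by lia.
case/card_gt0P => t tT.
exact: (Tsub g wu nwu tT).
Qed.

Lemma deg_split (U : finType) (adj : rel U) u w :
  #|Nb adj u| = #|Nb adj u :&: Nb adj w| + #|Nb adj u :\: Nb adj w|.
Proof. by rewrite cardsID. Qed.

Lemma c_le (U : finType) (adj : rel U) (g : GG adj) u w :
  u != w -> ~~ adj u w -> #|Nb adj u :&: Nb adj w| + 4 <= #|Nb adj u|.
Proof.
move=> uw nuw; rewrite (deg_split adj u w) leq_add2l; exact: Xcard.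
Qed.

Lemma deg8 (U : finType) (adj : rel U) (g : GG adj) u : 8 <= #|Nb adj u|.
Proof.
have [s /andP [su nus]] := ganb g u.
have us : u != s by rewrite eq_sym.
have := c_le g us nus; have := gmu g us nus; lia.
Qed.

Lemma card_part (U : finType) (adj : rel U) (g : GG adj) v :
  #|U| = #|Ab adj v| + 1 + #|Nb adj v|.
Proof.
rewrite /Ab cardsCs setCK cardsU1 inE (negbTE (girr g v)) /=.
have := max_card (v |: Nb adj v); rewrite cardsU1 inE (negbTE (girr g v)) /=; lia.
Qed.

Lemma dcount (U : finType) (adj : rel U) (g : GG adj) v :
  \sum_(x in Nb adj v) (#|Nb adj x| - 1) =
  \sum_(y in Ab adj v) #|Nb adj v :&: Nb adj y|.
Proof.
have E1 : forall x, x \in Nb adj v ->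
  #|Nb adj x| - 1 = \sum_(y in Ab adj v) (y \in Nb adj x : nat).
  move=> x xv; rewrite card_sumI.
  have E : Nb adj x = v |: (Ab adj v :&: Nb adj x).
    apply/setP => y; rewrite !inE.
    case: (eqVneq y v) => [->|yv] /=; first by rewrite -(gsym g); rewrite inE in xv.
    case xy: (adj x y); rewrite ?andbF ?andbT //.
    by apply/esym; apply: (gtri g _ xy); rewrite inE in xv.
  rewrite {1}E cardsU1 !inE eqxx /=; lia.
rewrite (eq_bigr _ E1) exchange_big /=.
apply: eq_bigr => y _; rewrite -card_sumI.
apply: eq_bigr => x _; by rewrite !inE (gsym g).
Qed.



Lemma L8 (U : finType) (adj : rel U) (g : GG adj) v y x :
  #|Nb adj v| = 8 -> y != v -> ~~ adj v y -> adj v x -> ~~ adj x y ->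
  #|Nb adj y| < #|Nb adj x|.
Proof.
move=> d8 yv nvy vx nxy.
have vy : v != y by rewrite eq_sym.
have c4 := gmu g vy nvy.
have cl := c_le g vy nvy.
have Xs := deg_split adj v y.
set X := Nb adj v :\: Nb adj y in Xs.
have X4 : #|X| = 4.
  move: c4 cl Xs; rewrite d8; set a := #|_ :&: _|; set b := #|X|; clear; lia.
have Ts := deg_split adj y v.
set T := Nb adj y :\: Nb adj v in Ts.
have xX : x \in X by rewrite !inE vx andbT (gsym g).
have tX : forall t, t \in T -> forall z, z \in X -> adj t z.
  move=> t; rewrite !inE => /andP [nvt yt] z zX.
  have tv : t != v by apply/eqP => e; move: yt; rewrite e (gsym g) (negbTE nvy).
  have ntv : ~~ adj t v by rewrite (gsym g).
  have c4' := gmu g tv ntv.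
  have sub : Nb adj t :&: Nb adj v \subset X.
    apply/subsetP => w; rewrite !inE => /andP [tw vw]; rewrite vw andbT.
    exact: (gtri g yt tw).
  have eqX : (Nb adj t :&: Nb adj v) =i X.
    by apply/subset_cardP => //; apply/eqP; rewrite eqn_leq subset_leq_card // X4.
  by move: (eqX z); rewrite zX !inE => /andP [].
have : 0 < #|X :\ x|.
  move: X4; rewrite (cardsD1 x) xX; set b := #|_ :\ _|; clear; lia.
case/card_gt0P => x' x'X.
have x'X2 : x' \in X by move: x'X; rewrite !inE => /andP [].
move: x'X; rewrite !inE => /andP [x'x /andP [nyx' vx']].
have xx' : x != x' by rewrite eq_sym.
have nxx' : ~~ adj x x' by apply: (gtri g _ vx'); rewrite (gsym g).
have cl2 := c_le g xx' nxx'.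
have sub2 : v |: T \subset Nb adj x :&: Nb adj x'.
  apply/subsetP => z /setU1P [->|zT].
    by rewrite !inE -!(gsym g v) vx vx'.
  by rewrite !inE -!(gsym g z) (tX z zT x xX) (tX z zT x' x'X2).
move: (subset_leq_card sub2).
rewrite cardsU1.
have -> : v \notin T.
  by apply/negP; rewrite !inE => /andP [_ yv']; rewrite (gsym g) yv' in nvy.
have := deg8 g y.
have cyv : #|Nb adj y :&: Nb adj v| = #|Nb adj v :&: Nb adj y| by rewrite setIC.
move: c4 cl Ts cl2 cyv; rewrite d8 /=.
set a := #|Nb adj v :&: _|; set a' := #|Nb adj y :&: _|; set t := #|T|;
  set q := #|Nb adj x :&: _|; set dy := #|Nb adj y|; set dx := #|Nb adj x|.
clear; lia.
Qed.



Lemma graph_main (U : finType) (adj : rel U) (g : GG adj) (u0 : U) : 26 <= #|U|.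
Proof.
case: (@arg_minnP U u0 xpredT (fun w => #|Nb adj w|) isT) => v _ vmin.
rewrite leqNgt; apply/negP => nlt.
have part := card_part g v.
have dc := dcount g v.
have d8 := deg8 g v.
have lo : #|Nb adj v| * (#|Nb adj v| - 1) <= \sum_(x in Nb adj v) (#|Nb adj x| - 1).
  rewrite -sum_nat_const; apply: leq_sum => x _; apply: leq_sub2r; exact: vmin.
have hi : \sum_(y in Ab adj v) #|Nb adj v :&: Nb adj y| <= #|Ab adj v| * (#|Nb adj v| - 4).
  rewrite -sum_nat_const; apply: leq_sum => y; rewrite inAb => /andP [yv nvy].
  have := c_le g (_ : v != y) nvy; rewrite eq_sym => /(_ yv).
  set a := #|_ :&: _|; set b := #|_|; clear; lia.
case: (ltnP #|Nb adj v| 10) => hd.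
  have [e8|e9] : #|Nb adj v| = 8 \/ #|Nb adj v| = 9.
    move: d8 hd; set d := #|Nb adj v|; clear; lia.
  -
    have nb9 : forall x, adj v x -> 9 <= #|Nb adj x|.
      move=> x vx; have [s /andP [/andP [sv nvs] nsx]] := gedge g vx.
      have nxs : ~~ adj x s by rewrite (gsym g).
      have := L8 g e8 sv nvs vx nxs; have := deg8 g s.
      set p := #|Nb adj s|; set q := #|Nb adj x|; clear; lia.
    case: (boolP [exists x in Nb adj v, 10 <= #|Nb adj x|]).
      case/exists_inP => x0 x0v x010.
      have lo2 : 65 <= \sum_(x in Nb adj v) (#|Nb adj x| - 1).
        rewrite (eq_bigr (fun x => 8 + (#|Nb adj x| - 9))); last first.
          move=> x; rewrite inNb => /nb9; set q := #|Nb adj x|; clear; lia.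
        rewrite big_split /= sum_nat_const e8.
        have : #|Nb adj x0| - 9 <= \sum_(i in Nb adj v) (#|Nb adj i| - 9).
          by rewrite (bigD1 x0) //= leq_addr.
        move: x010; set q := #|Nb adj x0|; set r := \sum_(i in _) _; clear; lia.
      move: lo2 hi dc part nlt; rewrite e8.
      set S1 := \sum_(x in _) _; set S2 := \sum_(y in _) _; set a := #|Ab adj v|.
      move=> lo2 hi dc part nlt.
      have : a + 1 + 8 <= 25 by rewrite -part.
      clear -lo2 hi dc; lia.
    rewrite negb_exists_in => /forall_inP le9.
    have degA : forall z, z != v -> ~~ adj v z -> #|Nb adj z| = 8.
      move=> z zv nvz.
      have vz : v != z by rewrite eq_sym.
      have : 0 < #|Nb adj v :\: Nb adj z| by apply: leq_trans (Xcard g vz nvz).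
      case/card_gt0P => x; rewrite !inE => /andP [nzx vx].
      have nxz : ~~ adj x z by rewrite (gsym g).
      have := L8 g e8 zv nvz vx nxz; have := deg8 g z.
      have := le9 x; rewrite inNb => /(_ vx).
      set p := #|Nb adj z|; set q := #|Nb adj x|; clear; lia.
    have [y /andP [yv nvy]] := ganb g v.
    have nyv : ~~ adj y v by rewrite (gsym g).
    have : 0 < #|Nb adj y :\: Nb adj v| by apply: leq_trans (Xcard g yv nyv).
    case/card_gt0P => t; rewrite !inE => /andP [nvt yt].
    have tv : t != v by apply/eqP => e; move: yt; rewrite e (negbTE nyv).
    have ey := degA y yv nvy; have et := degA t tv nvt.
    have [s /andP [/andP [sy nys] nst]] := gedge g yt.
    have nts : ~~ adj t s by rewrite (gsym g).
    have := L8 g ey sy nys yt nts; rewrite et; have := deg8 g s.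
    set p := #|Nb adj s|; clear; lia.
  -
    pose K4 := [set y in Ab adj v | #|Nb adj v :&: Nb adj y| <= 4].
    have hi2 : \sum_(y in Ab adj v) #|Nb adj v :&: Nb adj y|
               <= \sum_(y in Ab adj v) (5 - (y \in K4 : nat)).
      apply: leq_sum => y yA.
      have := yA; rewrite inAb => /andP [yv nvy].
      have vy : v != y by rewrite eq_sym.
      have := c_le g vy nvy; rewrite e9.
      rewrite /K4 inE yA /=.
      case: (leqP #|Nb adj v :&: Nb adj y| 4) => /=;
        set c := #|_ :&: _|; clear; lia.
    have hs : \sum_(y in Ab adj v) (5 - (y \in K4 : nat)) + #|Ab adj v :&: K4|
              = #|Ab adj v| * 5.
      rewrite -card_sumI -big_split /= -sum_nat_const.
      by apply: eq_bigr => y _; case: (y \in K4).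
    have kA : #|Ab adj v :&: K4| <= 3 /\ #|Ab adj v :&: K4| < #|Ab adj v|.
      move: lo hi2 hs dc part nlt; rewrite e9.
      set S1 := \sum_(x in _) _; set S2 := \sum_(y in _) _; set S3 := \sum_(y in _) _.
      set a := #|Ab adj v|; set k := #|_ :&: K4|.
      move=> lo hi2 hs dc part nlt.
      have : a + 1 + 9 <= 25 by rewrite -part.
      clear -lo hi2 hs dc; lia.
    case: kA => k3 kA.
    have : ~~ (Ab adj v \subset K4).
      apply/negP => sub; move: kA; rewrite (setIidPl sub) ltnn //.
    case/subsetPn => y yA yK.
    have := yA; rewrite inAb => /andP [yv nvy].
    have vy : v != y by rewrite eq_sym.
    have nyv : ~~ adj y v by rewrite (gsym g).
    have c5 : 5 <= #|Nb adj v :&: Nb adj y|.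
      by move: yK; rewrite /K4 inE yA /= ltnNge.
    have Xs := deg_split adj v y; rewrite e9 in Xs.
    have T4 := Xcard g yv nyv.
    have sub : Nb adj y :\: Nb adj v \subset Ab adj v :&: K4.
      apply/subsetP => t; rewrite !inE => /andP [nvt yt].
      have tv : t != v by apply/eqP => e; move: yt; rewrite e (negbTE nyv).
      rewrite (negbTE tv) (negbTE nvt) /=.
      have sX : Nb adj v :&: Nb adj t \subset Nb adj v :\: Nb adj y.
        apply/subsetP => z; rewrite !inE => /andP [vz tz]; rewrite vz andbT.
        exact: (gtri g yt tz).
      apply: leq_trans (subset_leq_card sX) _.
      move: Xs c5; set c := #|_ :&: _|; set x := #|_ :\: _|; clear; lia.
    move: (subset_leq_card sub) T4 k3.
    set p := #|_ :\: _|; set q := #|_ :&: K4|; clear; lia.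
move: lo hi dc part nlt hd.
set S1 := \sum_(x in _) _; set S2 := \sum_(y in _) _; set d := #|Nb adj v|; set a := #|Ab adj v|.
move=> lo hi dc part nlt hd.
have : a + 1 + d <= 25 by rewrite -part.
clear -lo hi dc hd. nia.
Qed.



Definition Ec (U : finType) (h : RA -> {set U * U}) (x : atom) (u w : U) : bool :=
  (u, w) \in h [set x].

Lemma setT_atoms : [set: atom] = [set Id] :|: [set At_a] :|: [set At_b] :|: [set At_c].
Proof. by apply/setP => -[]; rewrite !inE eqxx ?orbT. Qed.

Lemma h_mono (U : finType) (h : RA -> {set U * U}) (Hr : representation h) (X Y : RA) :
  X \subset Y -> h X \subset h Y.
Proof.
case: Hr => hU _ sub.
by rewrite -(setUidPr sub) hU subsetUl.
Qed.

Lemma h_cover (U : finType) (h : RA -> {set U * U}) (Hr : representation h) p :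
  exists z, p \in h [set z].
Proof.
have := Hr; case=> hU [hC [[h0 hT] _]].
have : p \in h setT by rewrite hT inE.
rewrite setT_atoms !hU !inE => /orP [/orP [/orP [H|H]|H]|H]; by eexists; exact: H.
Qed.

Lemma h_uniq (U : finType) (h : RA -> {set U * U}) (Hr : representation h) p x y :
  p \in h [set x] -> p \in h [set y] -> x = y.
Proof.
move=> px py; apply/eqP; apply/negP => /negP xy.
have sub : [set y] \subset ~: [set x].
  by apply/subsetP => z; rewrite !inE => /eqP ->; rewrite eq_sym.
have := subsetP (h_mono Hr sub) p py.
have := Hr; case=> _ [hC _]; rewrite hC inE px //.
Qed.

Lemma h_mem (U : finType) (h : RA -> {set U * U}) (Hr : representation h) p (X : RA) :
  (p \in h X) = [exists z in X, p \in h [set z]].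
Proof.
apply/idP/idP.
  move=> pX; have [z pz] := h_cover Hr p.
  case zX: (z \in X); first by apply/exists_inP; exists z.
  have sub : [set z] \subset ~: X by apply/subsetP => t; rewrite !inE => /eqP ->; rewrite zX.
  have := subsetP (h_mono Hr sub) p pz.
  have := Hr; case=> _ [hC _]; rewrite hC inE pX //.
case/exists_inP => z zX pz.
have sub : [set z] \subset X by rewrite sub1set.
exact: (subsetP (h_mono Hr sub) p pz).
Qed.

Lemma E_id (U : finType) (h : RA -> {set U * U}) (Hr : representation h) u w :
  Ec h Id u w = (u == w).
Proof.
have := Hr; case=> _ [_ [_ [_ [_ [hid _]]]]].
by rewrite /Ec -/ra_id hid inE.
Qed.

Lemma E_sym (U : finType) (h : RA -> {set U * U}) (Hr : representation h) x u w :
  Ec h x u w = Ec h x w u.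
Proof.
have := Hr; case=> _ [_ [_ [_ [hconv _]]]].
have e : ra_conv [set x] = [set x] by rewrite /ra_conv imset_set1.
by rewrite /Ec -{1}e hconv inE.
Qed.

Lemma E_fwd (U : finType) (h : RA -> {set U * U}) (Hr : representation h) x y z u w :
  Ec h z u w -> le_comp x y z -> exists s, Ec h x u s && Ec h y s w.
Proof.
move=> Ez lz.
have := Hr; case=> _ [_ [_ [hcomp _]]].
have : (u, w) \in h (ra_comp [set x] [set y]).
  rewrite (h_mem Hr); apply/exists_inP; exists z => //.
  rewrite inE; apply/exists_inP; exists x; rewrite ?inE //.
  by apply/exists_inP; exists y; rewrite ?inE.
rewrite hcomp inE => /existsP [s Hs]; by exists s.
Qed.

Lemma E_bwd (U : finType) (h : RA -> {set U * U}) (Hr : representation h) x y z u s w :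
  Ec h x u s -> Ec h y s w -> Ec h z u w -> le_comp x y z.
Proof.
move=> Ex Ey Ez.
have := Hr; case=> _ [_ [_ [hcomp _]]].
have : (u, w) \in rel_comp (h [set x]) (h [set y]).
  by rewrite inE; apply/existsP; exists s; apply/andP; split; [exact: Ex | exact: Ey].
rewrite -hcomp (h_mem Hr) => /exists_inP [z' z'in Ez'].
have ez := h_uniq Hr Ez Ez'; subst z'.
move: z'in; rewrite inE => /exists_inP [x' x'in /exists_inP [y' y'in]].
by move: x'in y'in; rewrite !inE => /eqP -> /eqP ->.
Qed.
Definition atom_eqb (x y : atom) : bool :=
  match x, y with
  | Id, Id | At_a, At_a | At_b, At_b | At_c, At_c => true
  | _, _ => false end.

Lemma eq_atomE (x y : atom) : (x == y) = atom_eqb x y.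
Proof. by apply/eqP/idP => [->|]; case: x; case: y. Qed.

Lemma le_compE x y z : le_comp x y z =
  if atom_eqb x Id then atom_eqb z y
  else if atom_eqb y Id then atom_eqb z x
  else if atom_eqb z Id then atom_eqb x y
  else [|| atom_eqb x At_a, atom_eqb y At_a | atom_eqb z At_a].
Proof. by rewrite /le_comp !eq_atomE. Qed.

Lemma atest : (At_b == Id) = false /\ le_comp At_b At_c At_b = false /\ le_comp At_a At_a Id = true.
Proof. by rewrite !le_compE eq_atomE. Qed.



Definition adjR (U : finType) (h : RA -> {set U * U}) : rel U :=
  fun u w => Ec h At_b u w || Ec h At_c u w.

Lemma E_ne (U : finType) (h : RA -> {set U * U}) (Hr : representation h) x y u w :
  Ec h x u w -> Ec h y u w -> x = y.
Proof. exact: h_uniq. Qed.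

Lemma apairE (U : finType) (h : RA -> {set U * U}) (Hr : representation h) u w :
  u != w -> ~~ adjR h u w -> Ec h At_a u w.
Proof.
move=> uw nuw; have [z pz] := h_cover Hr (u, w).
case: z pz => pz //.
- by move: uw; rewrite -(E_id Hr) /Ec pz.
- by move: nuw; rewrite /adjR /Ec pz.
- by move: nuw; rewrite /adjR /Ec pz orbT.
Qed.

Lemma a_nadj (U : finType) (h : RA -> {set U * U}) (Hr : representation h) u w :
  Ec h At_a u w -> (u != w) && ~~ adjR h u w.
Proof.
move=> Ea; apply/andP; split.
  apply/negP => /eqP e; subst w.
  have Ei : Ec h Id u u by rewrite (E_id Hr).
  by have := E_ne Hr Ea Ei.
rewrite /adjR negb_or; apply/andP; split; apply/negP => H;
  by have := E_ne Hr Ea H.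
Qed.

Lemma rep_GG (U : finType) (h : RA -> {set U * U}) (Hr : representation h) :
  GG (adjR h).
Proof.
have adjP : forall u w, adjR h u w -> exists2 x, (x == At_b) || (x == At_c) & Ec h x u w.
  move=> u w; rewrite /adjR => /orP [H|H]; by eexists; [|exact: H]; rewrite eqxx ?orbT.
split.
- by move=> u w; rewrite /adjR (E_sym Hr At_b) (E_sym Hr At_c).
- move=> u; apply/negP => /adjP [x hx Ex].
  have Ei : Ec h Id u u by rewrite (E_id Hr).
  have e := E_ne Hr Ex Ei; subst x; by move: hx; rewrite !eq_atomE.
- move=> u s w /adjP [x hx Ex] /adjP [y hy Ey]; apply/negP => /adjP [z hz Ez].
  have := E_bwd Hr Ex Ey Ez; rewrite le_compE.
  by move: hx hy hz; rewrite !eq_atomE; case: x {Ex}; case: y {Ey}; case: z {Ez}.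
- move=> u w uw nuw.
  have Ea := apairE Hr uw nuw.
  pose f := fun s => (Ec h At_b u s, Ec h At_b s w).
  have sub : [set: bool * bool] \subset f @: (Nb (adjR h) u :&: Nb (adjR h) w).
    have gen : forall x y, ((x == At_b) || (x == At_c)) -> ((y == At_b) || (y == At_c)) ->
        (x == At_b, y == At_b) \in f @: (Nb (adjR h) u :&: Nb (adjR h) w).
      move=> x y hx hy.
      have lc : le_comp x y At_a.
        by rewrite le_compE; move: hx hy; rewrite !eq_atomE; case: x; case: y.
      have [s /andP [Exs Eys]] := E_fwd Hr Ea lc.
      apply/imsetP; exists s.
        rewrite !inE /adjR (E_sym Hr At_b w) (E_sym Hr At_c w).
        move: hx hy Exs Eys; clear lc; rewrite !eq_atomE.
        by case: x; case: y => // _ _ -> ->; rewrite ?orbT.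
      rewrite /f; congr pair.
        move: hx Exs; clear lc; case: x; rewrite !eq_atomE //= => _ Ex.
        by apply/esym/negP => Eb; have := E_ne Hr Eb Ex.
      move: hy Eys; clear lc; case: y; rewrite !eq_atomE //= => _ Ey.
      by apply/esym/negP => Eb; have := E_ne Hr Eb Ey.
    apply/subsetP => -[p q] _.
    have := gen (if p then At_b else At_c) (if q then At_b else At_c).
    by rewrite !eq_atomE; case: p; case: q => /= /(_ isT isT).
  have := subset_leq_card sub; rewrite cardsT card_prod card_bool => H.
  exact: leq_trans H (leq_imset_card _ _).
- move=> u w uw nuw.
  have Ea := apairE Hr uw nuw.
  have lc : le_comp At_a At_b At_a by rewrite le_compE.
  have [s /andP [Eus Esw]] := E_fwd Hr Ea lc.
  exists s; have /andP [_ ->] := a_nadj Hr Eus.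
  by rewrite andbT /adjR Esw.
- move=> u w /adjP [z hz Ez].
  have lc : le_comp At_a At_a z by rewrite le_compE; move: hz; rewrite !eq_atomE; case: z {Ez}.
  have [s /andP [Eus Esw]] := E_fwd Hr Ez lc.
  exists s; have /andP [su ->] := a_nadj Hr Eus; have /andP [_ ->] := a_nadj Hr Esw.
  by rewrite eq_sym su.
- move=> u.
  have Ei : Ec h Id u u by rewrite (E_id Hr).
  have lc : le_comp At_a At_a Id by rewrite le_compE.
  have [s /andP [Eus Esw]] := E_fwd Hr Ei lc.
  exists s; have /andP [us ->] := a_nadj Hr Eus.
  by rewrite eq_sym us.
Qed.

Theorem mainTheorem13 :
  forall n : nat, 20 <= n <= 25 -> ~ in_Spec n.
Proof.
move=> n /andP [n20 n25] [U [h [cU Hr]]].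
have : 0 < #|U| by rewrite cU; apply: leq_trans n20.
case/card_gt0P => u0 _.
have := graph_main (rep_GG Hr) u0.
by rewrite cU leqNgt ltnS n25.
Qed.
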